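(* There exists $\epsilon_0>0$ such that the following holds for every fixed $\epsilon\in(0,\epsilon_0)$. Let $(G_n)$ be a sequence of graphs, where $G_n$ has $n$ vertices and is $d$-regular for some $d=d(n)\ge 1$, and let $p=\frac{1-\epsilon}{d}$. Then, with probability tending to one as $n\to\infty$, every connected component of $(G_n)_p$ has at most $\frac{9\log n}{\epsilon^2}$ vertices.
   Context: For a graph $G$ and $p\in[0,1]$, $G_p$ denotes the random spanning subgraph of $G$ obtained by retaining each edge of $G$ independently with probability $p$ (bond percolation). $\log$ is the natural logarithm. *)

(* Defs.v *)
From HB Require Import structures.
From mathcomp Require Import all_boot all_order all_algebra.
From mathcomp Require Import all_classical all_reals all_analysis.
Set Implicit Arguments. Unset Strict Implicit. Unset Printing Implicit Defensive.
Import Order.TTheory GRing.Theory Num.Theory.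
Local Open Scope ring_scope.

Definition simple_graph (n : nat) (e : rel 'I_n) : Prop :=
  symmetric e /\ irreflexive e.

Definition regular (n : nat) (e : rel 'I_n) (d : nat) : Prop :=
  forall x : 'I_n, #|[set y | e x y]| = d.

(* Edge set: each undirected edge {x,y} is represented once as (x,y), x < y. *)
Definition edges (n : nat) (e : rel 'I_n) : {set 'I_n * 'I_n} :=
  [set xy : 'I_n * 'I_n | (val xy.1 < val xy.2)%N && e xy.1 xy.2].

Definition kept (n : nat) (S : {set 'I_n * 'I_n}) : rel 'I_n :=
  fun x y => ((x, y) \in S) || ((y, x) \in S).

Definition component (n : nat) (S : {set 'I_n * 'I_n}) (x : 'I_n) : {set 'I_n} :=
  [set y | connect (kept S) x y].

Definition perc_weight (R : realType) (n : nat) (e : rel 'I_n) (p : R)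
  (S : {set 'I_n * 'I_n}) : R :=
  p ^+ #|S| * (1 - p) ^+ (#|edges e| - #|S|).

Definition perc_prob (R : realType) (n : nat) (e : rel 'I_n) (p : R)
  (A : pred {set 'I_n * 'I_n}) : R :=
  \sum_(S in powerset (edges e) | A S) perc_weight e p S.

Definition has_big_component (R : realType) (n : nat) (M : R)
  : pred {set 'I_n * 'I_n} :=
  fun S => [exists x : 'I_n, M < (#|component S x|)%:R].

(* Main.v *)
Require Import Defs.
From HB Require Import structures.
From mathcomp Require Import all_boot all_order all_algebra.
From mathcomp Require Import all_classical all_reals all_analysis.
From mathcomp Require Import ring lra.
Import Order.TTheory GRing.Theory Num.Theory.
Local Open Scope ring_scope.

Section Helpers.
Set Implicit Arguments. Unset Strict Implicit.


Section Ex.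
Variable R : realType.
Variable K : finType.
Variable p : R.

Definition W (E S : {set K}) : R := p ^+ #|S| * (1 - p) ^+ (#|E| - #|S|).
Definition Ex (E : {set K}) (f : {set K} -> R) : R :=
  \sum_(S in powerset E) W E S * f S.

Lemma Ex_congr (E : {set K}) (f g : {set K} -> R) : (forall S : {set K}, S \subset E -> f S = g S) -> Ex E f = Ex E g.
Proof.
move=> H; apply: eq_bigr => S; rewrite powersetE => /H ->; done.
Qed.

Lemma cond_eq x (E S : {set K}) : x \notin E ->
  ((x |: S) \in powerset (x |: E)) && (x \in x |: S) && ((x |: S) :\ x == S)
  = (S \in powerset E).
Proof.
move=> xE; apply/idP/idP.
+ move=> /andP [/andP [H1 _] /eqP H2].
  rewrite powersetE -H2; rewrite powersetE in H1.
  have H3 := finset.setSD [set x] H1.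
  by move: H3; rewrite (finset.setU1K xE).
+ rewrite powersetE => SE.
  have xS : x \notin S := contraNN (fun h => fintype.subsetP SE x h) xE.
  by rewrite powersetE finset.setUS // finset.setU11 finset.setU1K // eqxx.
Qed.

Lemma Ex_split x (E : {set K}) (f : {set K} -> R) : x \notin E ->
  Ex (x |: E) f = p * Ex E (fun S => f (x |: S)) + (1 - p) * Ex E f.
Proof.
move=> xE; rewrite /Ex (bigID (fun S : {set K} => x \in S)) /=.
congr (_ + _).
- rewrite (reindex_onto (fun S => x |: S) (fun S => S :\ x)); last first.
    by move=> S /andP [_ xS]; rewrite finset.setD1K.
  rewrite big_distrr /=; apply: eq_big => S.
    by rewrite cond_eq.
  rewrite cond_eq // powersetE => SE.
  have xS : x \notin S := contraNN (fun h => fintype.subsetP SE x h) xE.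
  rewrite /W cardsU1 xS cardsU1 xE /= add1n subSS.
  by rewrite exprS; ring.
- rewrite big_distrr /=; apply: eq_big => S.
    by rewrite !powersetE -finset.subsetD1 finset.setU1K.
  move=> /andP [].
  rewrite powersetE => SE xS.
  have SE' : S \subset E by rewrite -(finset.setU1K xE) finset.subsetD1 SE.
  rewrite /W cardsU1 xE /= add1n subSn; last by apply: subset_leq_card.
  by rewrite exprS; ring.
Qed.

Lemma Ex_set0 (f : {set K} -> R) : Ex finset.set0 f = f finset.set0.
Proof. by rewrite /Ex powerset0 big_set1 /W cards0 !expr0 !mul1r. Qed.

Lemma set_ind (P : {set K} -> Prop) : P finset.set0 ->
  (forall (x : K) (E : {set K}), x \notin E -> P E -> P (x |: E)) -> forall E, P E.
Proof.
move=> H0 HS E; move: {2}#|E| (erefl #|E|) => m; elim: m E => [|m IH] E hE.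
  by move/eqP: hE; rewrite cards_eq0 => /eqP ->.
have [x xE] : exists x, x \in E by apply/card_gt0P; rewrite hE.
rewrite -(finset.setD1K xE); apply: HS; first by rewrite finset.setD11.
by apply: IH; move: hE; rewrite (cardsD1 x E) xE => -[].
Qed.

Lemma Ex_scale (E : {set K}) (k : R) (f : {set K} -> R) : Ex E (fun S => k * f S) = k * Ex E f.
Proof. by rewrite /Ex big_distrr; apply: eq_bigr => S _ /=; rewrite mulrCA. Qed.

Lemma Ex_pow (E : {set K}) (z : R) : Ex E (fun S => z ^+ #|S|) = (1 - p + p * z) ^+ #|E|.
Proof.
elim/set_ind: E => [|x E xE IH]; first by rewrite Ex_set0 cards0 !expr0.
rewrite Ex_split // cardsU1 xE /= add1n exprS -IH.
rewrite (@Ex_congr _ _ (fun S => z * z ^+ #|S|)); last first.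
  move=> S SE; have xS : x \notin S := contraNN (fun h => fintype.subsetP SE x h) xE.
  by rewrite cardsU1 xS /= add1n exprS.
rewrite (Ex_scale E z (fun S => z ^+ #|S|)); ring.
Qed.

Lemma Ex_one (E : {set K}) : Ex E (fun _ => 1) = 1.
Proof.
have := Ex_pow E 1; rewrite (@Ex_congr _ _ (fun _ => 1)) => [->|S _]; last by rewrite expr1n.
by rewrite mulr1 subrK expr1n.
Qed.

Lemma Ex_const (E : {set K}) (k : R) : Ex E (fun _ => k) = k.
Proof. by rewrite -[X in Ex _ (fun _ => X)]mulr1 Ex_scale Ex_one mulr1. Qed.

Hypothesis p0 : 0 <= p.
Hypothesis p1 : p <= 1.

Lemma W_ge0 (E S : {set K}) : 0 <= W E S.
Proof. by rewrite /W mulr_ge0 // exprn_ge0 // subr_ge0. Qed.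

Lemma Ex_le (E : {set K}) (f g : {set K} -> R) : (forall S : {set K}, S \subset E -> f S <= g S) -> Ex E f <= Ex E g.
Proof.
move=> H; apply: ler_sum => S; rewrite powersetE => /H fg.
by apply: ler_wpM2l => //; apply: W_ge0.
Qed.

Lemma Ex_fact (D E' : {set K}) (F : {set K} -> R) : [disjoint D & E'] ->
  Ex (D :|: E') F = Ex D (fun X => Ex E' (fun Y => F (X :|: Y))).
Proof.
elim/set_ind: D F => [|x D xD IH] F dis.
  rewrite finset.set0U Ex_set0; apply: Ex_congr => S _; by rewrite finset.set0U.
have xE' : x \notin E' by move: dis; rewrite disjoint_sym finset.disjoints_subset => /fintype.subsetP H;
   apply/negP => /H; rewrite inE finset.setU11.
have dis' : [disjoint D & E'] by apply: fintype.disjointWl dis; apply: finset.subsetUr.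
rewrite -finset.setUA Ex_split; last by rewrite inE negb_or xD.
rewrite !IH // Ex_split //; congr (_ * _ + _).
by apply: Ex_congr => S _; apply: Ex_congr => Y _; rewrite finset.setUA.
Qed.

End Ex.



Section Graph.
Variable T : finType.

Definition adj (S : {set T * T}) : rel T := fun x y => ((x, y) \in S) || ((y, x) \in S).
Definition rV (V : {set T}) (S : {set T * T}) : rel T :=
  fun x y => [&& x \in V, y \in V & adj S x y].
Definition Cl (V : {set T}) (S : {set T * T}) (A : {set T}) : {set T} :=
  [set y in V | [exists x in A, connect (rV V S) x y]].
Definition Ta (a : T) : {set T * T} := [set xy | (xy.1 == a) || (xy.2 == a)].
Definition Nb (a : T) (X : {set T * T}) : {set T} := [set y | adj X a y].
Definition oth (a : T) (xy : T * T) : T := if xy.1 == a then xy.2 else xy.1.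

Lemma closed_path (e : rel T) (Rs : {set T}) x y : connect e x y -> x \in Rs ->
  (forall u v, u \in Rs -> e u v -> v \in Rs) -> y \in Rs.
Proof.
move=> + Hx H; move=> /connectP [q Hq ->]; elim: q x Hx Hq => //= v q IH x Hx /andP [exv Hq].
exact: IH (H _ _ Hx exv) Hq.
Qed.

Definition Bset (a : T) (V A : {set T}) (X : {set T * T}) : {set T} :=
  (A :\ a) :|: (Nb a X :&: (V :\ a)).

Lemma Cl_incl (V A : {set T}) (S : {set T * T}) a : a \in A -> A \subset V ->
  Cl V S A \subset a |: Cl (V :\ a) (S :\: Ta a) (Bset a V A (S :&: Ta a)).
Proof.
move=> aA AV; apply/fintype.subsetP => y; rewrite inE => /andP [yV /existsP [x /andP [xA cxy]]].
have BCl : forall w, w \in Bset a V A (S :&: Ta a) ->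
    w \in Cl (V :\ a) (S :\: Ta a) (Bset a V A (S :&: Ta a)).
  move=> w wB; rewrite inE; apply/andP; split; last first.
    by apply/existsP; exists w; rewrite wB connect0.
  move: wB; rewrite !inE => /orP [/andP [-> wA] | /andP [_ ->]] //.
  by rewrite (fintype.subsetP AV).
apply: (closed_path cxy).
  case: (eqVneq x a) => [->|xa]; first by rewrite setU11.
  rewrite setU1r // BCl // !inE xa xA //.
move=> u v uR /and3P [uV vV suv].
case: (eqVneq v a) => [->|va]; first by rewrite setU11.
apply: setU1r.
case/setU1P: uR => [ua|uC].
  subst u; apply: BCl; rewrite !inE va vV /= orbC; apply/orP; left.
  by move: suv; rewrite /adj !inE /= !eqxx /= !orbT !andbT.
move: (uC); rewrite inE => /andP [uV' /existsP [x0 /andP [x0B c0]]].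
rewrite inE; apply/andP; split; first by rewrite !inE va vV.
apply/existsP; exists x0; rewrite x0B /=.
apply: (connect_trans c0); apply: connect1.
have ua : u != a by move: uV'; rewrite !inE => /andP [].
rewrite /rV uV' !inE va vV /=.
by move: suv; rewrite /adj !inE /= (negbTE ua) (negbTE va) /=.
Qed.

Lemma Nb_card a (X : {set T * T}) : (#|Nb a X| <= #|X|)%N.
Proof.
apply: (leq_trans _ (leq_imset_card (oth a) X)); apply: subset_leq_card.
apply/fintype.subsetP => y; rewrite inE /adj => /orP [H|H]; apply/imsetP.
  by exists (a, y) => //; rewrite /oth /= eqxx.
exists (y, a) => //; rewrite /oth /=; by case: eqVneq.
Qed.

Lemma Bset_card a (V A : {set T}) X : a \in A ->
  (#|Bset a V A X| <= (#|A| - 1) + #|X|)%N.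
Proof.
move=> aA; apply: (leq_trans (leq_card_setU _ _)); apply: leq_add.
  by rewrite (cardsD1 a A) aA add1n subn1.
apply: leq_trans (Nb_card a X); apply: subset_leq_card; exact: subsetIl.
Qed.

End Graph.



Lemma split_sets (K : finType) (X Y T1 : {set K}) : X \subset T1 -> Y \subset ~: T1 ->
  ((X :|: Y) :&: T1 = X) /\ ((X :|: Y) :\: T1 = Y).
Proof.
move=> /fintype.subsetP XT /fintype.subsetP YT; split; apply/setP => w; rewrite !inE.
  case wX: (w \in X); first by rewrite (XT _ wX).
  case wY: (w \in Y); last by [].
  by move: (YT _ wY); rewrite inE => /negbTE ->.
case wY: (w \in Y).
  by move: (YT _ wY); rewrite inE => ->; rewrite orbT.
case wX: (w \in X); last by rewrite andbF.
by rewrite (XT _ wX).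
Qed.

Lemma key (R : realType) (T : finType) (p th z : R) (d : nat) :
  0 <= p -> p <= 1 -> 1 <= th -> 1 <= z -> th * (1 - p + p * z) ^+ d <= z ->
  forall (V : {set T}) (E : {set T * T}) (A : {set T}),
  (forall a, #|E :&: Ta a| <= d)%N -> A \subset V ->
  Ex p E (fun S => th ^+ #|Cl V S A|) <= z ^+ #|A|.
Proof.
move=> p0 p1 th1 z1 hz V; move: {2}#|V| (leqnn #|V|) => m.
elim: m V => [|m IH] V hV E A dE AV.
  have A0 : A = finset.set0.
    apply/eqP; rewrite -cards_eq0 -leqn0; apply: leq_trans hV; exact: subset_leq_card.
  subst A; rewrite cards0 expr0.
  rewrite (@Ex_congr _ _ p E _ (fun _ => 1)) ?Ex_const // => S _.
  suff -> : Cl V S finset.set0 = finset.set0 by rewrite cards0 expr0.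
  by apply/setP => y; rewrite !inE; case: (y \in V) => //=; apply/existsP => -[x]; rewrite inE.
case: (eqVneq A finset.set0) => [A0|].
  subst A; rewrite cards0 expr0.
  rewrite (@Ex_congr _ _ p E _ (fun _ => 1)) ?Ex_const // => S _.
  suff -> : Cl V S finset.set0 = finset.set0 by rewrite cards0 expr0.
  by apply/setP => y; rewrite !inE; case: (y \in V) => //=; apply/existsP => -[x]; rewrite inE.
case/set0Pn => a aA.
have aV : a \in V by apply: (fintype.subsetP AV).
have hV' : (#|V :\ a| <= m)%N by move: hV; rewrite (cardsD1 a V) aV add1n.
set E1 := E :&: Ta a; set E2 := E :\: Ta a.
have dE2 : forall b, (#|E2 :&: Ta b| <= d)%N.
  move=> b; apply: leq_trans (dE b); apply: subset_leq_card; apply: finset.setSI; exact: subsetDl.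
pose g X Y := th * th ^+ #|Cl (V :\ a) Y (Bset a V A X)|.
apply: (@le_trans _ _ (Ex p E (fun S => g (S :&: Ta a) (S :\: Ta a)))).
  apply: Ex_le => // S _; rewrite /g -exprS; apply: ler_weXn2l => //.
  have := subset_leq_card (Cl_incl S aA AV); rewrite cardsU1.
  move=> H; apply: (leq_trans H); rewrite -add1n leq_add2r; exact: leq_b1.
have EE : E = E1 :|: E2 by rewrite finset.setID.
have dis : [disjoint E1 & E2].
  rewrite finset.disjoints_subset; apply/fintype.subsetP => w; rewrite !inE => /andP [-> ->].
  by [].
rewrite [X in Ex p X _]EE Ex_fact //.
apply: (@le_trans _ _ (Ex p E1 (fun X => th * z ^+ #|Bset a V A X|))).
  apply: Ex_le => // X XE1.
  rewrite (@Ex_congr _ _ p E2 _ (fun Y => g X Y)); last first.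
    move=> Y YE2.
    have XT : X \subset Ta a by apply: (fintype.subset_trans XE1); exact: finset.subsetIr.
    have YT : Y \subset ~: Ta a.
      by apply/fintype.subsetP => w /(fintype.subsetP YE2); rewrite !inE => /andP [].
    by have [-> ->] := split_sets XT YT.
  rewrite /g Ex_scale; apply: ler_wpM2l; first by lra.
  apply: IH => //.
  apply/fintype.subsetP => w; rewrite !inE => /orP [/andP [-> /(fintype.subsetP AV) ->] //|].
  by case/andP.
apply: (@le_trans _ _ (Ex p E1 (fun X => th * (z ^+ (#|A| - 1) * z ^+ #|X|)))).
  apply: Ex_le => // X _; apply: ler_wpM2l; first by lra.
  by rewrite -exprD; apply: ler_weXn2l => //; apply: Bset_card.
rewrite Ex_scale Ex_scale Ex_pow.
have hA : #|A| = (#|A| - 1).+1 by rewrite subn1 prednK // card_gt0; apply/set0Pn; exists a.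
rewrite [X in _ <= z ^+ X]hA exprS.
have q1 : 1 <= 1 - p + p * z by nra.
have qE : (1 - p + p * z) ^+ #|E1| <= (1 - p + p * z) ^+ d.
  by apply: ler_weXn2l => //; exact: dE.
have zA : 0 <= z ^+ (#|A| - 1) by apply: exprn_ge0; lra.
have h2 : th * (1 - p + p * z) ^+ #|E1| <= z.
  apply: le_trans hz; apply: ler_wpM2l => //; lra.
rewrite mulrCA [X in _ <= X]mulrC; apply: ler_wpM2l => //.
Qed.



Lemma expR_bound (R : realType) (eps : R) : 0 < eps -> eps < 1/10 ->
  expR (eps ^+ 2 * (1 - eps) ^+ 2 / 4 + (1 - eps) * eps) <= 1 + eps.
Proof.
move=> e0 e1.
set c := eps ^+ 2 * (1 - eps) ^+ 2 / 4.
set y := c + (1 - eps) * eps.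
have hc : c = ((eps - eps ^+ 2) / 2) ^+ 2 by rewrite /c; field.
have c0 : 0 <= c by rewrite hc; apply: sqr_ge0.
have cs : c <= eps ^+ 2 / 4.
  rewrite /c; have : (1 - eps) ^+ 2 <= 1 by nra.
  move=> h; have e2 : 0 <= eps ^+ 2 by apply: sqr_ge0.
  nra.
set u := y / 2.
have u0 : (eps - eps ^+ 2) / 2 <= u by rewrite /u /y; nra.
have u0' : 0 <= (eps - eps ^+ 2) / 2 by rewrite expr2; nra.
have hu : c <= u ^+ 2.
  rewrite hc; apply: lerXn2r; rewrite ?nnegrE; lra.
have ee : eps ^+ 2 <= 1 by rewrite expr2; nra.
have ee2 : (1 - eps) * eps <= 1 by nra.
have u1 : u < 1 by rewrite /u /y; lra.
have key : 1 <= (1 + eps) * (1 - u) ^+ 2.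
  have iden : (1 + eps) * (1 - u) ^+ 2 = 1 + eps ^+ 3 + (1 + eps) * (u ^+ 2 - c).
    by rewrite /u /y; field.
  rewrite iden; have : 0 <= eps ^+ 3 by apply: exprn_ge0; lra.
  have : 0 <= (1 + eps) * (u ^+ 2 - c) by apply: mulr_ge0; lra.
  lra.
have hy : expR y = expR u * expR u by rewrite -expRD /u; congr expR; field.
have w1 : 1 - u <= expR (- u) by have := expR_ge1Dx (- u); lra.
have uw : expR u * expR (- u) = 1 by rewrite -expRD subrr expR0.
have eu : 0 < expR u by apply: expR_gt0.
have uq : expR u * (1 - u) <= 1.
  rewrite -uw; apply: ler_wpM2l; lra.
rewrite hy.
have q0 : 0 < 1 - u by lra.
have : (expR u * (1 - u)) ^+ 2 <= 1.
  apply: exprn_ile1 => //; apply: mulr_ge0; lra.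
rewrite exprMn => h1.
nra.
Qed.

Lemma cond_ineq (R : realType) (eps : R) (d : nat) : 0 < eps -> eps < 1/10 -> (1 <= d)%N ->
  expR (eps ^+ 2 * (1 - eps) ^+ 2 / 4) *
    (1 - (1 - eps) / d%:R + (1 - eps) / d%:R * (1 + eps)) ^+ d <= 1 + eps.
Proof.
move=> e0 e1 d1.
set p := (1 - eps) / d%:R.
have dn : d%:R != 0 :> R by rewrite pnatr_eq0 -lt0n.
have hp : d%:R * p = 1 - eps by rewrite /p; field.
have p0 : 0 <= p by rewrite /p divr_ge0 //; lra.
have h1 : 1 - p + p * (1 + eps) <= expR (p * eps).
  have := expR_ge1Dx (p * eps); lra.
have h2 : (1 - p + p * (1 + eps)) ^+ d <= expR (p * eps) ^+ d.
  apply: lerXn2r; rewrite ?nnegrE; nra.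
rewrite -expRM_natl mulrA hp in h2.
apply: le_trans (expR_bound e0 e1); rewrite expRD.
apply: ler_wpM2l => //; exact: expR_ge0.
Qed.



Lemma deg_edges (n : nat) (e : rel 'I_n) (d : nat) : simple_graph e -> regular e d ->
  forall a, (#|edges e :&: Ta a| <= d)%N.
Proof.
move=> [sym irr] reg a; rewrite -(reg a) -(card_in_imset (f := oth a)).
  apply: subset_leq_card; apply/fintype.subsetP => y /imsetP [[x1 y1]].
  rewrite !inE /oth /= => /andP [/andP [_ e1] t1] ->.
  case: (eqVneq x1 a) => [<-|h1] //=.
  by move: t1; rewrite (negbTE h1) /= => /eqP ey; rewrite -ey sym.
move=> [x1 y1] [x2 y2]; rewrite !inE /oth /= => /andP [/andP [l1 e1] t1] /andP [/andP [l2 e2] t2].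
case: (eqVneq x1 a) => [h1|h1]; case: (eqVneq x2 a) => [h2|h2] /= H.
- by rewrite h1 h2 H.
- move: t2; rewrite (negbTE h2) /= => /eqP h3.
  by move: l1 l2; rewrite h1 H h3 => l1 l2; have := ltn_trans l1 l2; rewrite ltnn.
- move: t1; rewrite (negbTE h1) /= => /eqP h3.
  by move: l1 l2; rewrite h2 -H h3 => l1 l2; have := ltn_trans l1 l2; rewrite ltnn.
- move: t1 t2; rewrite (negbTE h1) (negbTE h2) /= => /eqP -> /eqP ->.
  by rewrite H.
Qed.

Lemma comp_Cl (n : nat) (S : {set 'I_n * 'I_n}) (v : 'I_n) :
  (#|component S v| <= #|Cl [set: 'I_n] S [set v]|)%N.
Proof.
apply: subset_leq_card; apply/fintype.subsetP => y; rewrite !inE => cy.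
apply/existsP; exists v; rewrite inE eqxx /=.
by rewrite (@eq_connect _ _ (kept S)) // => x z; rewrite /rV !finset.in_setT.
Qed.

Lemma Ex_sum (R : realType) (K I : finType) (p : R) (E : {set K}) (g : I -> {set K} -> R) :
  Ex p E (fun S => \sum_i g i S) = \sum_i Ex p E (g i).
Proof.
rewrite /Ex exchange_big /=; apply: eq_bigr => S _; by rewrite big_distrr.
Qed.

End Helpers.
Unset Implicit Arguments.


Theorem mainTheorem1 (R : realType) :
  exists eps0 : R, 0 < eps0 /\
  forall eps : R, 0 < eps -> eps < eps0 ->
  forall delta : R, 0 < delta ->
  exists N : nat, forall (n : nat), (N <= n)%N ->
  forall (d : nat) (e : rel 'I_n), (1 <= d)%N ->
    simple_graph e -> regular e d ->
    perc_prob e ((1 - eps) / d%:R)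
      (has_big_component (9 * ln (n%:R : R) / eps ^+ 2)) <= delta.
Proof.
exists (1/10); split; first lra.
move=> eps e0 e1 delta dl0.
set c := eps ^+ 2 * (1 - eps) ^+ 2 / 4.
have hN := archi_boundP (ltW (expR_gt0 (4 / delta))).
exists (Num.Def.archi_bound (expR (4 / delta))).
move=> n Nn d e d1 sg reg.
set p := (1 - eps) / d%:R.
set M := 9 * ln (n%:R : R) / eps ^+ 2.
set L := ln (n%:R : R).
have nbig : expR (4 / delta) < n%:R.
  by apply: (lt_le_trans hN); rewrite ler_nat.
have n0 : 0 < (n%:R : R) by apply: lt_trans nbig; apply: expR_gt0.
have lnn : 4 / delta <= L.
  by rewrite -[4 / delta]expRK /L ler_ln ?posrE ?expR_gt0 // ltW.
have dn : 0 < (d%:R : R) by rewrite ltr0n.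
have p0 : 0 <= p by rewrite /p divr_ge0 //; lra.
have p1 : p <= 1.
  rewrite /p ler_pdivrMr //; have : (1 : R) <= d%:R by rewrite ler1n.
  lra.
have c0 : 0 <= c by rewrite /c; apply: mulr_ge0; [apply: mulr_ge0; apply: sqr_ge0|lra].
have th1 : 1 <= expR c by have := expR_ge1Dx c; lra.
have z1 : 1 <= 1 + eps by lra.
have hz := cond_ineq e0 e1 d1.
have hv : forall v : 'I_n,
    Ex p (edges e) (fun S => expR c ^+ #|Cl [set: 'I_n] S [set v]|) <= 1 + eps.
  move=> v; have := key p0 p1 th1 z1 hz (deg_edges sg reg) (finset.subsetT [set v]).
  by rewrite cards1 expr1.
set k := expR (- (c * M)).
have k0 : 0 <= k by apply: expR_ge0.
apply: (@le_trans _ _ (Ex p (edges e)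
   (fun S => k * \sum_(v : 'I_n) expR c ^+ #|Cl [set: 'I_n] S [set v]|))).
  rewrite /perc_prob /Ex big_mkcondr /=; apply: ler_sum => S _.
  have W0 : 0 <= W p (edges e) S.
    by apply: W_ge0.
  have s0 : 0 <= \sum_(v : 'I_n) expR c ^+ #|Cl [set: 'I_n] S [set v]|.
    by apply: sumr_ge0 => v _; apply: exprn_ge0; lra.
  case: ifP => [/existsP [v hv']|_]; last by apply: mulr_ge0 => //; apply: mulr_ge0.
  rewrite -[perc_weight e p S]mulr1.
  apply: ler_wpM2l => //.
  rewrite (bigD1 v) //= mulrDr.
  have r0 : 0 <= k * \sum_(i | i != v) expR c ^+ #|Cl [set: 'I_n] S [set i]|.
    by apply: mulr_ge0 => //; apply: sumr_ge0 => i _; apply: exprn_ge0; lra.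
  suff h : 1 <= k * expR c ^+ #|Cl [set: 'I_n] S [set v]|.
    by apply: (le_trans h); rewrite lerDl.
  rewrite /k -expRM_natl -expRD; apply: le_trans (expR_ge1Dx _).
  have hc := comp_Cl S v.
  have : (#|component S v|%:R : R) <= #|Cl [set: 'I_n] S [set v]|%:R by rewrite ler_nat.
  move=> h1; have : c * M <= c * #|Cl [set: 'I_n] S [set v]|%:R.
    apply: ler_wpM2l => //; apply: le_trans h1; exact: ltW.
  by move=> h2; rewrite lerDl addrC subr_ge0 [_ * c]mulrC.
rewrite Ex_scale Ex_sum.
have : \sum_(v : 'I_n) Ex p (edges e) (fun S => expR c ^+ #|Cl [set: 'I_n] S [set v]|)
    <= \sum_(v : 'I_n) (1 + eps) by apply: ler_sum => v _; apply: hv.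
rewrite sumr_const card_ord -mulr_natr => hs.
apply: (@le_trans _ _ (k * ((1 + eps) * n%:R))); first by apply: ler_wpM2l.
have cM : c * M = 9 / 4 * (1 - eps) ^+ 2 * L.
  rewrite /c /M /L; field; apply/eqP => h; lra.
have L0 : 0 < L by apply: lt_le_trans lnn; apply: divr_gt0; lra.
have cM2 : 3 / 2 * L <= c * M.
  rewrite cM; have : 2 / 3 <= (1 - eps) ^+ 2 by rewrite expr2; nra.
  nra.
have nE : (n%:R : R) = expR L by rewrite /L lnK // posrE.
have kn : k * n%:R <= expR (- (L / 2)).
  rewrite nE /k -expRD ler_expR; lra.
have eL : 2 / delta <= expR (L / 2).
  have := expR_ge1Dx (L / 2); lra.
have hh : expR (- (L / 2)) * expR (L / 2) = 1 by rewrite -expRD addNr expR0.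
have a0 : 0 <= expR (- (L / 2)) by apply: expR_ge0.
have hd : expR (- (L / 2)) <= delta / 2.
  have : 0 <= expR (- (L / 2)) * (expR (L / 2) - 2 / delta) by apply: mulr_ge0; lra.
  rewrite mulrBr hh => h.
  have : expR (- (L / 2)) * (2 / delta) <= 1 by lra.
  rewrite mulrA ler_pdivrMr // mul1r; lra.
have kn0 : 0 <= k * n%:R by apply: mulr_ge0 => //; lra.
rewrite mulrCA.
have : (1 + eps) * (k * n%:R) <= 2 * (k * n%:R) by apply: ler_wpM2r => //; lra.
lra.
Qed.
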